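(* Let $\Sigma$ be a set and let $1\le p<\infty$. Let $\rho$ be a separating quasi-metric on $\Sigma^*$ that is arbitrarily decomposable of order $p$. Suppose $f:\Sigma\to\mathbb{R}$ is strictly positive and $g:\Sigma\to\mathbb{R}$ is non-negative, and let $\bar f,\bar g$ be their canonical homomorphic extensions to $\Sigma^*$. Assume that for all $x,y\in\Sigma^*$, \[\bar f(x)-\bar f(y)\le\rho^p(x,y)\quad\text{and}\quad \bar g(y)-\bar g(x)\le\rho^p(x,y).\] Then the function $Q:\Sigma^*\times\Sigma^*\to\mathbb{R}$ defined by \[Q(x,y)=\min_{\tilde x\in\mathfrak{F}(x),\ \tilde y\in\mathfrak{F}(y)}\Big(\bar f(x)-\bar f(\tilde x)+\bar g(y)-\bar g(\tilde y)+\rho^p(\tilde x,\tilde y)\Big)^{1/p}\] is a quasi-metric on $\Sigma^*$.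
   Context: $\Sigma^*$ is the free monoid on $\Sigma$ (finite words, concatenation, empty word $e$). A word $u$ is a factor of $v$ if $v=xuy$ for some $x,y\in\Sigma^*$; $\mathfrak{F}(v)$ denotes the set of factors of $v$. The canonical homomorphic extension of $f:\Sigma\to\mathbb{R}$ is $\bar f:\Sigma^*\to\mathbb{R}$ with $\bar f(e)=0$ and $\bar f(x_1\cdots x_n)=\sum_{i=1}^n f(x_i)$. A quasi-metric on $X$ is a map $q:X\times X\to\mathbb{R}_{\ge0}$ with $q(x,y)=q(y,x)=0\iff x=y$ and $q(x,z)\le q(x,y)+q(y,z)$; it is separating if $q(x,y)=0$ implies $x=y$. A function $\rho:\Sigma^*\times\Sigma^*\to\mathbb{R}$ is arbitrarily decomposable of order $p$ if for all $x,y\in\Sigma^*$: (i) for every $y'\in\mathfrak{F}(y)$ there exist $x',x_1^*,x_2^*\in\mathfrak{F}(x)$ with $x=x_1^*x'x_2^*$ and $y_1^*,y_2^*,u,v\in\mathfrak{F}(y)$ with $y=y_1^*uy'vy_2^*$ and $\rho(x,y)\ge(\rho^p(x_1^*,y_1^* )+\rho^p(x',y')+\rho^p(x_2^*,y_2^* ))^{1/p}$; and (ii) for every $x'\in\mathfrak{F}(x)$ there exist $y',y_1^*,y_2^*\in\mathfrak{F}(y)$ with $y=y_1^*y'y_2^*$ and $x_1^*,x_2^*,u,v\in\mathfrak{F}(x)$ with $x=x_1^*ux'vx_2^*$ and $\rho(x,y)\ge(\rho^p(x_1^*,y_1^* )+\rho^p(x',y')+\rho^p(x_2^*,y_2^*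 ))^{1/p}$. *)

(* Defs.v *)
From HB Require Import structures.
From mathcomp Require Import all_boot all_order all_algebra.
From mathcomp Require Import all_classical all_reals.
From mathcomp Require Import exp.
Set Implicit Arguments. Unset Strict Implicit. Unset Printing Implicit Defensive.
Import Order.TTheory GRing.Theory Num.Theory.
Local Open Scope ring_scope.

Definition factor (Sigma : Type) (u v : seq Sigma) : Prop :=
  exists x y : seq Sigma, v = x ++ u ++ y.

Definition factors (Sigma : Type) (v : seq Sigma) : seq (seq Sigma) :=
  [seq drop i (take j v) | i <- iota 0 (size v).+1, j <- iota 0 (size v).+1].

Definition hext (R : realType) (Sigma : Type) (f : Sigma -> R) (x : seq Sigma) : R :=
  \sum_(a <- x) f a.

Definition quasi_metric (R : realType) (X : Type) (q : X -> X -> R) : Prop :=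
  (forall x y, 0 <= q x y) /\
  (forall x y, (q x y = 0 /\ q y x = 0) <-> x = y) /\
  (forall x y z, q x z <= q x y + q y z).

Definition separating (R : realType) (X : Type) (q : X -> X -> R) : Prop :=
  forall x y, q x y = 0 -> x = y.

Definition arb_decomposable (R : realType) (Sigma : Type)
  (rho : seq Sigma -> seq Sigma -> R) (p : R) : Prop :=
  forall x y : seq Sigma,
    (forall y', factor y' y ->
      exists x' x1 x2 : seq Sigma,
        [/\ factor x' x, factor x1 x, factor x2 x & x = x1 ++ x' ++ x2] /\
      exists y1 y2 u v : seq Sigma,
        [/\ factor y1 y, factor y2 y, factor u y, factor v y &
            y = y1 ++ u ++ y' ++ v ++ y2] /\
        (rho x1 y1 `^ p + rho x' y' `^ p + rho x2 y2 `^ p) `^ p^-1 <= rho x y)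
 /\ (forall x', factor x' x ->
      exists y' y1 y2 : seq Sigma,
        [/\ factor y' y, factor y1 y, factor y2 y & y = y1 ++ y' ++ y2] /\
      exists x1 x2 u v : seq Sigma,
        [/\ factor x1 x, factor x2 x, factor u x, factor v x &
            x = x1 ++ u ++ x' ++ v ++ x2] /\
        (rho x1 y1 `^ p + rho x' y' `^ p + rho x2 y2 `^ p) `^ p^-1 <= rho x y).

Definition Qterm (R : realType) (Sigma : Type) (rho : seq Sigma -> seq Sigma -> R)
  (f g : Sigma -> R) (p : R) (x y xt yt : seq Sigma) : R :=
  (hext f x - hext f xt + hext g y - hext g yt + rho xt yt `^ p) `^ p^-1.

(* Q(x,y) = min over factors xt of x and yt of y of Qterm; the empty word is a
   factor of both, so Qterm .. [::] [::] is an element of the range and the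
   initial value of the fold does not change the minimum. *)
Definition Qfun (R : realType) (Sigma : Type) (rho : seq Sigma -> seq Sigma -> R)
  (f g : Sigma -> R) (p : R) (x y : seq Sigma) : R :=
  \big[Num.min/Qterm rho f g p x y [::] [::]]_(xt <- factors x)
    \big[Num.min/Qterm rho f g p x y [::] [::]]_(yt <- factors y)
      Qterm rho f g p x y xt yt.

(* Main.v *)
From Pilot Require Import Defs.
From HB Require Import structures.
From mathcomp Require Import all_boot all_order all_algebra.
From mathcomp Require Import all_classical all_reals.
From mathcomp Require Import exp.
From mathcomp Require Import convex hoelder interval_inference.
From mathcomp Require Import ring lra zify.
Import Order.TTheory GRing.Theory Num.Theory.
Local Open Scope ring_scope.

Local Notation factor := (@Pilot.Defs.factor _).

Lemma split_pref (T : Type) (s1 t1 s2 t2 : seq T) :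
  s1 ++ t1 = s2 ++ t2 -> (size s1 <= size s2)%N ->
  exists w, s2 = s1 ++ w /\ t1 = w ++ t2.
Proof.
elim: s1 s2 => [|x s1 IH] [|y s2] //=.
- by move=> ->; exists [::].
- by move=> ->; exists (y :: s2).
- move=> [-> E]; rewrite ltnS => /(IH _ E) [w [-> ->]].
  by exists w.
Qed.

Arguments split_pref {T s1 t1 s2 t2}.

Section Sums.
Variable R : realType.
Variable T : Type.

Lemma hext_cat (F : T -> R) a b : hext F (a ++ b) = hext F a + hext F b.
Proof. by rewrite /hext big_cat. Qed.

Lemma hext_nil (F : T -> R) : hext F [::] = 0.
Proof. by rewrite /hext big_nil. Qed.

Lemma hext_ge0 (F : T -> R) a : (forall x, 0 <= F x) -> 0 <= hext F a.
Proof. by move=> H; rewrite /hext; apply: sumr_ge0 => i _. Qed.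

Lemma hext_eq0 (F : T -> R) a : (forall x, 0 < F x) -> hext F a = 0 -> a = [::].
Proof.
move=> H; case: a => [//|x a]; rewrite /hext big_cons => E.
have := H x; have : 0 <= \sum_(j <- a) F j by apply: sumr_ge0 => i _; exact: ltW.
move=> h1 h2; exfalso; lra.
Qed.

Arguments hext_ge0 {F} a.

Lemma overlap (y a b : seq T) : factor a y -> factor b y ->
  exists c, [/\ factor c a, factor c b &
    forall F : T -> R, (forall x, 0 <= F x) -> hext F a + hext F b <= hext F y + hext F c].
Proof.
move=> [p1 [s1 Ea]] [p2 [s2 Eb]].
wlog le12 : a b p1 s1 p2 s2 Ea Eb / (size p1 <= size p2)%N.
  move=> W; case: (leqP (size p1) (size p2)) => h; first exact: (W a b p1 s1 p2 s2).
  have [c [c1 c2 c3]] := W b a p2 s2 p1 s1 Eb Ea (ltnW h).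
  by exists c; split => // F F0; rewrite addrC; apply: c3.
have E : p1 ++ (a ++ s1) = p2 ++ (b ++ s2) by rewrite -Ea -Eb.
have [w [Hp2 Hw]] := split_pref E le12.
case: (leqP (size a) (size w)) => h1.
  have [m [Hw2 Hs1]] := split_pref Hw h1.
  exists [::]; split; first by rewrite /Pilot.Defs.factor; exists a, [::]; rewrite /= !cats0.
    by rewrite /Pilot.Defs.factor; exists b, [::]; rewrite /= !cats0.
  move=> F F0; rewrite Ea Hs1 !hext_cat hext_nil.
  have := hext_ge0 p1 F0; have := hext_ge0 m F0; have := hext_ge0 s2 F0; lra.
have [a' [Ha Ha']] := split_pref (esym Hw) (ltnW h1).
case: (leqP (size a') (size b)) => h2.
  have [b' [Hb Hs1]] := split_pref (esym Ha') h2.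
  exists a'; split; first by rewrite /Pilot.Defs.factor; exists w, [::]; rewrite /= !cats0.
    by rewrite /Pilot.Defs.factor; exists [::], b'.
  move=> F F0; rewrite Ea Ha Hb Hs1 !hext_cat.
  have := hext_ge0 p1 F0; have := hext_ge0 s2 F0; lra.
have [r [Ha2 Hs2]] := split_pref Ha' (ltnW h2).
exists b; split; first by rewrite /Pilot.Defs.factor; exists w, r; rewrite Ha Ha2.
  by rewrite /Pilot.Defs.factor; exists [::], [::]; rewrite /= !cats0.
move=> F F0; rewrite Ea Ha Ha2 !hext_cat.
have := hext_ge0 p1 F0; have := hext_ge0 s1 F0; lra.
Qed.
End Sums.

Section Lists.
Variable T : Type.

Lemma In_cat (x : T) (a b : seq T) : List.In x a \/ List.In x b -> List.In x (a ++ b).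
Proof.
elim: a => [|y a IH] /=; first by case.
case=> [[->|h]|h]; [by left|right; apply: IH; left|right; apply: IH; right] => //.
Qed.

Lemma In_cat_inv (x : T) (a b : seq T) : List.In x (a ++ b) -> List.In x a \/ List.In x b.
Proof.
elim: a => [|y a IH] /=; first by right.
by case=> [->|/IH [h|h]]; [left; left|left; right|right].
Qed.

Lemma In_flatten (x : T) (l : seq T) (L : seq (seq T)) :
  List.In x l -> List.In l L -> List.In x (flatten L).
Proof.
move=> hx; elim: L => [|m L IH] //= [->|h]; apply: In_cat; [left|right; exact: IH] => //.
Qed.

Lemma In_flatten_inv (x : T) (L : seq (seq T)) :
  List.In x (flatten L) -> exists l, List.In l L /\ List.In x l.
Proof.
elim: L => [|m L IH] //= /In_cat_inv [h|/IH [l [h1 h2]]].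
  by exists m; split => //; left.
by exists l; split => //; right.
Qed.

Lemma In_map (A : Type) (f : A -> T) (s : seq A) (a : A) :
  List.In a s -> List.In (f a) (map f s).
Proof. by elim: s => [|b s IH] //= [->|h]; [left|right; exact: IH]. Qed.

Lemma In_map_inv (A : Type) (f : A -> T) (s : seq A) (y : T) :
  List.In y (map f s) -> exists a, y = f a.
Proof. by elim: s => [|b s IH] //= [<-|/IH]; [exists b|]. Qed.
End Lists.
Arguments In_cat {T x a b}.
Arguments In_cat_inv {T x a b}.
Arguments In_flatten {T x l L}.
Arguments In_flatten_inv {T x L}.
Arguments In_map {T A f s a}.
Arguments In_map_inv {T A f s y}.

Lemma In_nat (i : nat) (s : seq nat) : i \in s -> List.In i s.
Proof.
elim: s => [|j s IH] //=; rewrite in_cons => /orP [/eqP ->|h]; [left|right; exact: IH] => //.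
Qed.

Section Fac.
Variable T : Type.

Lemma factor_seg (v : seq T) i j : factor (drop i (take j v)) v.
Proof.
exists (take i (take j v)), (drop j v).
by rewrite catA cat_take_drop cat_take_drop.
Qed.

Lemma factors_factor (u v : seq T) : List.In u (factors v) -> factor u v.
Proof.
rewrite /factors => /In_flatten_inv [l [H1 H2]].
move: H1 H2 => /In_map_inv [i ->] /In_map_inv [j ->].
exact: factor_seg.
Qed.

Lemma factor_factors (u v : seq T) : factor u v -> List.In u (factors v).
Proof.
move=> [x [y Ev]].
have hu : u = drop (size x) (take (size x + size u) v).
  by rewrite Ev catA take_size_cat ?size_cat // drop_size_cat.
have hs : (size x + size u <= size v)%N by rewrite Ev !size_cat addnA leq_addr.
rewrite hu /factors.
apply: (@In_flatten _ _ [seq drop (size x) (take j v) | j <- iota 0 (size v).+1]).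
  apply: (@In_map _ _ (fun j => drop (size x) (take j v))); apply: In_nat; rewrite mem_iota /= add0n ltnS //.
apply: (@In_map _ _ (fun i => [seq drop i (take j v) | j <- iota 0 (size v).+1])).
apply: In_nat; rewrite mem_iota /= add0n ltnS.
exact: leq_trans (leq_addr _ _) hs.
Qed.

Lemma factor_refl (v : seq T) : factor v v.
Proof. by exists [::], [::]; rewrite cats0. Qed.

Lemma factor_nil (v : seq T) : factor [::] v.
Proof. by exists [::], v. Qed.

Lemma factor_trans (u v w : seq T) : factor u v -> factor v w -> factor u w.
Proof.
move=> [a [b ->]] [c [d ->]]; exists (c ++ a), (b ++ d).
by rewrite -!catA.
Qed.

Lemma factor_size (u v : seq T) : factor u v -> (size u <= size v)%N.
Proof. by move=> [a [b ->]]; rewrite !size_cat addnC -addnA leq_addr. Qed.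

Lemma factor_antisym (u v : seq T) : factor u v -> factor v u -> u = v.
Proof.
move=> h1 h2; have := factor_size _ _ h1; have := factor_size _ _ h2.
move: h1 => [a [b E]] s1 s2.
have ha : size a = 0%N by move: s1 s2; rewrite E !size_cat; lia.
have hb : size b = 0%N by move: s1 s2; rewrite E !size_cat; lia.
case: a E ha => [|x a] E //= _; case: b E hb => [|x b] E //= _.
by rewrite E cats0.
Qed.
End Fac.

Section Mins.
Variable R : realType.
Variable T : Type.

Lemma bmin_le (L : seq T) (F : T -> R) i w : List.In w L ->
  \big[Num.min/i]_(u <- L) F u <= F w.
Proof.
elim: L => [|x L IH] //= [->|h]; rewrite big_cons ge_min ?lexx //.
by rewrite IH ?orbT.
Qed.

Lemma bmin_attain (L : seq T) (F : T -> R) i :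
  \big[Num.min/i]_(u <- L) F u = i \/
  exists w, List.In w L /\ \big[Num.min/i]_(u <- L) F u = F w.
Proof.
elim: L => [|x L IH]; first by left; rewrite big_nil.
rewrite big_cons; case: (leP (F x) (\big[Num.min/i]_(u <- L) F u)) => h.
  by right; exists x; split; [left|].
case: IH => [->|[w [h1 ->]]]; first by left.
by right; exists w; split => //; right.
Qed.
End Mins.

Lemma alg_fin (R : realType) (M s t B1 B2 X Y Z P Q : R) :
  0 < s -> 0 < t -> 0 < M -> 0 < B1 -> 0 < B2 -> 0 <= P -> 0 <= Q ->
  P + X <= B1 -> Q + Y <= B2 -> B1 / M <= s / (s + t) -> B2 / M <= t / (s + t) ->
  Z / M <= s / (s + t) * (X / B1) + t / (s + t) * (Y / B2) -> P + Q + Z <= M.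
Proof.
move=> s0 t0 M0 B10 B20 P0 Q0 H1 H2 K1 K2 HZ.
move: K1 K2 HZ; set u := s / (s + t); set v := t / (s + t); set A := X / B1; set B := Y / B2.
move=> K1 K2 HZ.
have uv : u + v = 1 by rewrite /u /v; field; rewrite gt_eqF //; lra.
have eX : X = A * B1 by rewrite /A divfK // gt_eqF.
have eY : Y = B * B2 by rewrite /B divfK // gt_eqF.
have mulM : forall w, w = M * (w / M) by move=> w; field; rewrite gt_eqF.
have hZ : Z <= M * (u * A + v * B) by rewrite (mulM Z) ler_pM2l.
have h1 : B1 <= M * u by rewrite (mulM B1) ler_pM2l.
have h2 : B2 <= M * v by rewrite (mulM B2) ler_pM2l.
have hA : 0 <= 1 - A.
  by rewrite -(pmulr_rge0 _ B10) mulrBr mulr1 mulrC -eX; lra.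
have hB : 0 <= 1 - B.
  by rewrite -(pmulr_rge0 _ B20) mulrBr mulr1 mulrC -eY; lra.
have g1 : 0 <= (1 - A) * (M * u - B1) by apply: mulr_ge0 => //; lra.
have g2 : 0 <= (1 - B) * (M * v - B2) by apply: mulr_ge0 => //; lra.
have eM : M = M * u + M * v by rewrite -mulrDr uv mulr1.
rewrite eX eY in H1 H2.
move: g1 g2 hZ; rewrite !mulrBl !mulrBr !mul1r !mulrDr.
rewrite [in X in _ <= X]eM.
nra.
Qed.

Section S.
Variable R : realType.
Local Open Scope convex_scope.
Implicit Types p : R.
Lemma convp (p l x y : R) : 1 <= p -> 0 <= l -> l <= 1 -> 0 <= x -> 0 <= y ->
  (l * x + (1 - l) * y) `^ p <= l * x `^ p + (1 - l) * y `^ p.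
Proof.
move=> p1 l0 l1 x0 y0.
have := @convex_powR R p p1 (Itv01 l0 l1) x y.
rewrite !inE /= !in_itv /= !andbT => /(_ x0 y0).
by rewrite !convRE.
Qed.

Lemma powRVx p (x : R) : 0 < x -> (x^-1) `^ p = (x `^ p)^-1.
Proof.
move=> x0; apply: (@mulrI _ (x `^ p)); first by rewrite unitfE gt_eqF // powR_gt0.
rewrite -powRM ?ltW ?invr_gt0 // mulfV ?gt_eqF // powR1 mulfV //.
by rewrite gt_eqF // powR_gt0.
Qed.

Lemma powRpinv p (x : R) : 1 <= p -> 0 <= x -> (x `^ p^-1) `^ p = x.
Proof. move=> p1 x0; rewrite -powRrM mulVf ?powRr1 //; apply/eqP => p0; rewrite p0 in p1; lra. Qed.
Lemma powRinvp p (x : R) : 1 <= p -> 0 <= x -> (x `^ p) `^ p^-1 = x.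
Proof. move=> p1 x0; rewrite -powRrM mulfV ?powRr1 //; apply/eqP => p0; rewrite p0 in p1; lra. Qed.

Lemma mink p P Q a b B1 B2 : 1 <= p -> 0 <= P -> 0 <= Q -> 0 <= a -> 0 <= b ->
  P + a `^ p <= B1 -> Q + b `^ p <= B2 ->
  (P + Q + (a + b) `^ p) `^ p^-1 <= B1 `^ p^-1 + B2 `^ p^-1.
Proof.
move=> p1 P0 Q0 a0 b0 H1 H2.
have p0 : 0 < p by lra.
have Xa := powR_ge0 a p; have Xb := powR_ge0 b p.
have B10 : 0 <= B1 by lra.
have B20 : 0 <= B2 by lra.
set s := B1 `^ p^-1; set t := B2 `^ p^-1.
have s0 : 0 <= s by exact: powR_ge0.
have t0 : 0 <= t by exact: powR_ge0.
have sp : s `^ p = B1 by exact: powRpinv.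
have tp : t `^ p = B2 by exact: powRpinv.
suff : P + Q + (a + b) `^ p <= (s + t) `^ p.
  move=> H; rewrite -[s + t](@powRinvp p) ?addr_ge0 //.
  apply: ge0_ler_powR => //; rewrite ?invr_ge0 ?ltW // nnegrE ?powR_ge0 //.
  by rewrite !addr_ge0 // powR_ge0.
have [s00|spos] := eqVneq s 0.
  have HB1 : B1 = 0 by rewrite -sp s00 powR0 // gt_eqF.
  have a00 : a = 0 by apply: (@powR_eq0_eq0 _ _ p); apply/le_anti; rewrite powR_ge0; lra.
  by rewrite s00 a00 !add0r tp; lra.
have [t00|tpos] := eqVneq t 0.
  have HB2 : B2 = 0 by rewrite -tp t00 powR0 // gt_eqF.
  have b00 : b = 0 by apply: (@powR_eq0_eq0 _ _ p); apply/le_anti; rewrite powR_ge0; lra.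
  by rewrite t00 b00 !addr0 sp; lra.
have sg : 0 < s by rewrite lt0r spos.
have tg : 0 < t by rewrite lt0r tpos.
set S := s + t.
have Sg : 0 < S by rewrite /S; lra.
set M := S `^ p.
have Mg : 0 < M by exact: powR_gt0.
have B1g : 0 < B1 by rewrite -sp powR_gt0.
have B2g : 0 < B2 by rewrite -tp powR_gt0.
have l0 : 0 <= s / S by rewrite divr_ge0 // ltW.
have l1 : s / S <= 1 by rewrite ler_pdivrMr // mul1r /S; lra.
have Hc := @convp p (s / S) (a / s) (b / t) p1 l0 l1 (divr_ge0 a0 (ltW sg)) (divr_ge0 b0 (ltW tg)).
have e1 : 1 - s / S = t / S by rewrite /S; field; rewrite gt_eqF.
rewrite e1 in Hc.
have e2 : s / S * (a / s) + t / S * (b / t) = (a + b) / S.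
  by field; rewrite !gt_eqF.
have pd : forall u v, 0 <= u -> 0 < v -> (u / v) `^ p = u `^ p / v `^ p.
  by move=> u v u0 v0; rewrite powRM ?invr_ge0 ?(ltW v0) // powRVx.
rewrite e2 !pd ?addr_ge0 // -/M sp tp in Hc.
have k1e : (s / S) `^ p <= s / S by apply: ge1r_powR => //; rewrite divr_gt0.
have k2e : (t / S) `^ p <= t / S.
  apply: ge1r_powR => //; rewrite divr_gt0 //= ler_pdivrMr // mul1r /S; lra.
rewrite !pd ?(ltW sg) ?(ltW tg) // -/M sp tp in k1e k2e.
exact: (@alg_fin R M s t B1 B2 (a `^ p) (b `^ p) ((a + b) `^ p) P Q sg tg Mg B1g B2g P0 Q0 H1 H2 k1e k2e Hc).
Qed.
End S.

Arguments hext_ge0 {R T F} a.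
Arguments hext_eq0 {R T F} a.
Arguments bmin_le {R T L F i w}.
Arguments bmin_attain {R T} L F i.
Arguments mink {R p P Q a b B1 B2}.
Arguments factor_factors {T u v}.
Arguments factors_factor {T u v}.
Arguments factor_trans {T u v w}.

Lemma powR_mono (R : realType) (r x y : R) : 0 <= r -> 0 <= x -> x <= y -> x `^ r <= y `^ r.
Proof.
move=> r0 x0 xy; apply: (ge0_ler_powR r0) => //; rewrite nnegrE //.
exact: le_trans xy.
Qed.

Lemma hext_le {R : realType} {T : Type} {F : T -> R} {u v} :
  (forall a, 0 <= F a) -> factor u v -> hext F u <= hext F v.
Proof.
move=> F0 [a [b ->]]; rewrite !hext_cat.
have := hext_ge0 a F0; have := hext_ge0 b F0; lra.
Qed.


Lemma lin1 {R : realType} {fx fxa fx1 fx' fx2 fy1 fy2 fa fu fc fv fb fy gz gzb gz1 gz' gz2 gb1 gb2 gb gu gv gc ga gy r11 r22 s11 s22 rxz ab : R} :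
  fxa = fx1 + fx' + fx2 -> fx1 - fy1 <= r11 -> fx2 - fy2 <= r22 ->
  fa = fy1 + fu + fc + fv + fy2 -> 0 <= fu -> 0 <= fv -> fa + fb <= fy + fc ->
  gzb = gz1 + gz' + gz2 -> gz1 - gb1 <= s11 -> gz2 - gb2 <= s22 ->
  gb = gb1 + gu + gc + gv + gb2 -> 0 <= gu -> 0 <= gv -> ga + gb <= gy + gc ->
  rxz <= ab ->
  fx - fx' + gz - gz' + rxz <=
  (fx - fxa + gy - ga + r11 + r22) + (fy - fb + gz - gzb + s11 + s22) + ab.
Proof. lra. Qed.

Lemma lin2 {R : realType} {F Fa G Ga r1 ra r2 R0 : R} :
  r1 + ra + r2 <= R0 -> (F - Fa + G - Ga + r1 + r2) + ra <= F - Fa + G - Ga + R0.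
Proof. lra. Qed.

Lemma lin0 {R : realType} {F Fa G Ga r1 r2 : R} :
  Fa <= F -> Ga <= G -> 0 <= r1 -> 0 <= r2 -> 0 <= F - Fa + G - Ga + r1 + r2.
Proof. lra. Qed.

Section Main.
Variables (R : realType) (Sigma : Type) (p : R).
Variables (rho : seq Sigma -> seq Sigma -> R) (f g : Sigma -> R).
Hypothesis p1 : 1 <= p.
Hypothesis f0 : forall a, 0 <= f a.
Hypothesis g0 : forall a, 0 <= g a.
Hypothesis rho0 : forall x y, 0 <= rho x y.

Local Notation Q := (Qfun rho f g p).
Local Notation Tm := (Qterm rho f g p).

Lemma Q_le x y xt yt : factor xt x -> factor yt y -> Q x y <= Tm x y xt yt.
Proof.
move=> hx hy; rewrite /Qfun.
apply: le_trans (bmin_le (factor_factors hx)) _.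
exact: (bmin_le (factor_factors hy)).
Qed.

Lemma Q_attain x y : exists xt yt, [/\ factor xt x, factor yt y & Q x y = Tm x y xt yt].
Proof.
rewrite /Qfun.
case: (bmin_attain (factors x) (fun xt => \big[Num.min/Tm x y [::] [::]]_(yt <- factors y) Tm x y xt yt) (Tm x y [::] [::])) => [->|[xt [hx ->]]].
  by exists [::], [::]; split => //; exact: factor_nil.
case: (bmin_attain (factors y) (fun yt => Tm x y xt yt) (Tm x y [::] [::])) => [->|[yt [hy ->]]].
  by exists [::], [::]; split => //; exact: factor_nil.
by exists xt, yt; split => //; exact: factors_factor.
Qed.

Lemma base_ge0 x y xt yt : factor xt x -> factor yt y ->
  0 <= hext f x - hext f xt + hext g y - hext g yt + rho xt yt `^ p.
Proof.
move=> hx hy; have := hext_le f0 hx; have := hext_le g0 hy.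
have := powR_ge0 (rho xt yt) p; lra.
Qed.

Lemma Q_ge0 x y : 0 <= Q x y.
Proof. by have [xt [yt [_ _ ->]]] := Q_attain x y; exact: powR_ge0. Qed.

Lemma dec_pow (S r : R) : 0 <= S -> S `^ p^-1 <= r -> S <= r `^ p.
Proof.
move=> S0 h; rewrite -(@powRpinv R p S p1 S0).
apply: powR_mono => //; [exact: le_trans ler01 p1|exact: powR_ge0].
Qed.


Lemma Q_zero_factor x y : (forall a, 0 < f a) -> separating rho -> Q x y = 0 -> factor x y.
Proof.
move=> fpos sepr H.
have [xt [yt [hx hy E]]] := Q_attain x y.
rewrite E /Qterm in H.
have B0 := powR_eq0_eq0 H.
have := hext_le f0 hx; have := hext_le g0 hy; have := powR_ge0 (rho xt yt) p.
move=> r0 gl fl.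
have r00 : rho xt yt `^ p = 0 by lra.
have fe : hext f x = hext f xt by lra.
have exy := sepr _ _ (powR_eq0_eq0 r00).
move: hx fe => [a [b Ex]] fe.
have ab : hext f a + hext f b = 0 by move: fe; rewrite Ex !hext_cat; lra.
have ha : hext f a = 0 by have := hext_ge0 a f0; have := hext_ge0 b f0; lra.
have hb : hext f b = 0 by lra.
by rewrite Ex (hext_eq0 a fpos ha) (hext_eq0 b fpos hb) /= cats0 exy.
Qed.

Lemma Q_tri x y z : quasi_metric rho -> arb_decomposable rho p ->
  (forall x y, hext f x - hext f y <= rho x y `^ p) ->
  (forall x y, hext g y - hext g x <= rho x y `^ p) ->
  Q x z <= Q x y + Q y z.
Proof.
move=> [_ [_ tri]] dec hf hg.
have pge0 : 0 <= p by exact: le_trans ler01 p1.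
have [xa [a [hxa ha E1]]] := Q_attain x y.
have [b [zb [hb hzb E2]]] := Q_attain y z.
have [c [hca hcb Hov]] := @overlap R _ _ _ _ ha hb.
have [dec1 _] := dec xa a.
have [_ dec2] := dec b zb.
have [x' [x1 [x2 [[fx' fx1 fx2 Exa] [y1 [y2 [u [v [[fy1 fy2 fu fv Ea] Hd1]]]]]]]]] := dec1 c hca.
have [z' [z1 [z2 [[fz' fz1 fz2 Ezb] [b1 [b2 [u' [v' [[fb1 fb2 fu' fv' Eb] Hd2]]]]]]]]] := dec2 c hcb.
have hx' : factor x' x := factor_trans fx' hxa.
have hz' : factor z' z := factor_trans fz' hzb.
apply: le_trans (Q_le _ _ _ _ hx' hz') _.
rewrite E1 E2 /Qterm.
have D1 := dec_pow _ _ (addr_ge0 (addr_ge0 (powR_ge0 _ _) (powR_ge0 _ _)) (powR_ge0 _ _)) Hd1.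
have D2 := dec_pow _ _ (addr_ge0 (addr_ge0 (powR_ge0 _ _) (powR_ge0 _ _)) (powR_ge0 _ _)) Hd2.
have L1 : hext f xa = hext f x1 + hext f x' + hext f x2 by rewrite Exa !hext_cat addrA.
have L2 := hf x1 y1; have L2' := hf x2 y2.
have L3 : hext f a = hext f y1 + hext f u + hext f c + hext f v + hext f y2.
  by rewrite Ea !hext_cat !addrA.
have L3u := hext_ge0 u f0; have L3v := hext_ge0 v f0.
have L4 := Hov f f0.
have L5 : hext g zb = hext g z1 + hext g z' + hext g z2 by rewrite Ezb !hext_cat addrA.
have L6 := hg b1 z1; have L6' := hg b2 z2.
have L7 : hext g b = hext g b1 + hext g u' + hext g c + hext g v' + hext g b2.
  by rewrite Eb !hext_cat !addrA.
have L7u := hext_ge0 u' g0; have L7v := hext_ge0 v' g0.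
have L8 := Hov g g0.
have L9 : rho x' z' `^ p <= (rho x' c + rho c z') `^ p.
  by apply: powR_mono => //; exact: tri.
have Fx := hext_le f0 hxa; have Gy := hext_le g0 ha.
have Fy := hext_le f0 hb; have Gz := hext_le g0 hzb.
have R11 := powR_ge0 (rho x1 y1) p; have R22 := powR_ge0 (rho x2 y2) p.
have S11 := powR_ge0 (rho b1 z1) p; have S22 := powR_ge0 (rho b2 z2) p.
apply: (@le_trans _ _ ((
  (hext f x - hext f xa + hext g y - hext g a + rho x1 y1 `^ p + rho x2 y2 `^ p) +
  (hext f y - hext f b + hext g z - hext g zb + rho b1 z1 `^ p + rho b2 z2 `^ p) +
  (rho x' c + rho c z') `^ p) `^ p^-1)).
  apply: powR_mono; first by rewrite invr_ge0.
    exact: base_ge0.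
  exact: (lin1 L1 L2 L2' L3 L3u L3v L4 L5 L6 L6' L7 L7u L7v L8 L9).
apply: mink.
- exact: p1.
- exact: lin0 Fx Gy R11 R22.
- exact: lin0 Fy Gz S11 S22.
- exact: rho0.
- exact: rho0.
- exact: lin2 D1.
- exact: lin2 D2.
Qed.

End Main.

Theorem theorem5p3 (R : realType) (Sigma : Type) (p : R)
  (rho : seq Sigma -> seq Sigma -> R) (f g : Sigma -> R) :
  1 <= p ->
  quasi_metric rho -> separating rho -> arb_decomposable rho p ->
  (forall a, 0 < f a) -> (forall a, 0 <= g a) ->
  (forall x y, hext f x - hext f y <= rho x y `^ p) ->
  (forall x y, hext g y - hext g x <= rho x y `^ p) ->
  quasi_metric (Qfun rho f g p).
Proof.
move=> p1 qm sep dec fpos g0 hf hg.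
have f0 : forall a, 0 <= f a by move=> a; exact: ltW.
have [rho0 [rhoeq _]] := qm.
have pn0 : p != 0 by apply/eqP => e; rewrite e in p1; move: p1; rewrite ler10.
have Qyy : forall y, Qfun rho f g p y y = 0.
  move=> y; apply/le_anti/andP; split; last by apply: Q_ge0.
  eapply le_trans; first (eapply Q_le; eauto using factor_refl).
  have [r _] := (rhoeq y y).2 erefl.
  rewrite /Qterm r.
  have -> : hext f y - hext f y + hext g y - hext g y + 0 `^ p = 0.
    by rewrite (powR0 pn0); ring.
  by rewrite (powR0 (invr_neq0 pn0)).
split; first by move=> x y; apply: Q_ge0.
split.
  move=> x y; split.
    move=> [h1 h2]; apply: factor_antisym.
      by apply: (@Q_zero_factor R Sigma p rho f g).
    by apply: (@Q_zero_factor R Sigma p rho f g).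
  by move=> ->; rewrite Qyy.
by move=> x y z; apply: (@Q_tri R Sigma p rho f g).
Qed.
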